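(* For every $n$, the set $\mathrm{Rect}^\ast(n)=\{(a^b): ab=n,\ a,b\ge 2\}$ of nontrivial rectangular partitions of $n$ is an independent set in the partition graph $G_n$; that is, no two distinct nontrivial rectangular partitions of $n$ are adjacent.
   Context: The partition graph $G_n$ has as vertices the integer partitions of $n$; two partitions are adjacent if one is obtained from the other by a single elementary unit transfer followed by reordering: decrease one part by $1$ and either increase a different part by $1$ or create a new part equal to $1$, then delete a part that became $0$ and sort in nonincreasing order (the result being different from the original). $(a^b)$ denotes the partition with $b$ parts all equal to $a$. *)

(* Defs.v *)
From mathcomp Require Import all_boot.
Set Implicit Arguments. Unset Strict Implicit. Unset Printing Implicit Defensive.

Definition is_partition (n : nat) (p : seq nat) : bool :=
  sorted geq p && all (fun x => 0 < x) p && (sumn p == n).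

Definition normalize (s : seq nat) : seq nat :=
  sort geq (filter (fun x => 0 < x) s).

(* Elementary unit transfer: decrease part i by 1, then either increase a
   different part j (j < size p, j <> i) or create a new part equal to 1
   (j = size p: incr_nth appends a 1); delete a zero part, sort; the result
   must differ from p. *)
Definition unit_transfer (p q : seq nat) : Prop :=
  exists i j, i < size p /\ j <= size p /\ j <> i /\
    q = normalize (incr_nth (set_nth 0 p i (nth 0 p i).-1) j) /\ q <> p.

Definition partition_adj (n : nat) (p q : seq nat) : Prop :=
  is_partition n p /\ is_partition n q /\ (unit_transfer p q \/ unit_transfer q p).

Definition rect (a b : nat) : seq nat := nseq b a.

(* Main.v *)
Require Import Defs.
From mathcomp Require Import all_boot.

Lemma ut_rect_not_rect a b q c d : 2 <= a -> 2 <= b ->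
  unit_transfer (rect a b) q -> q <> rect c d.
Proof.
move=> ha hb [i [j [hi [hj [hji [-> _]]]]]] E.
set p := rect a b in hi hj E.
set t := set_nth 0 p i (nth 0 p i).-1 in E.
set s := incr_nth t j in E.
have szp : size p = b by rewrite /p /rect size_nseq.
have szt : size t = b by rewrite /t size_set_nth szp; apply/maxn_idPr; rewrite -szp.
have szs : b <= size s by rewrite /s size_incr_nth szt; case: ifP => // /negbT; rewrite -leqNgt => h; apply: leq_trans h _.
have nthp k : k < b -> nth 0 p k = a by move=> hk; rewrite /p /rect nth_nseq hk.
have memq x : x \in s -> 0 < x -> x = c.
  move=> hx px.
  have : x \in rect c d by rewrite -E /normalize mem_sort mem_filter px hx.
  by rewrite /rect mem_nseq => /andP [_ /eqP].
have hi' : i < b by rewrite -szp.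
have h1 : nth 0 s i = a.-1.
  rewrite /s nth_incr_nth /t nth_set_nth /= eqxx nthp //.
  by case: eqP => // Hij; case: hji.
set k := if i == 0 then 1 else 0.
have hk : k < b by rewrite /k; case: ifP => _; [exact: hb | exact: leq_trans hb].
have hki : k != i by rewrite /k; case: (i =P 0) => [->|/eqP]; [|rewrite eq_sym].
have h2 : a <= nth 0 s k.
  rewrite /s nth_incr_nth /t nth_set_nth /= (negbTE hki) nthp //.
  exact: leq_addl.
have e1 : a.-1 = c.
  apply: memq; first by rewrite -h1 mem_nth // (leq_trans hi' szs).
  by rewrite -subn1 subn_gt0 (leq_trans _ ha).
have e2 : nth 0 s k = c.
  apply: memq; first by rewrite mem_nth // (leq_trans hk szs).
  by apply: leq_trans h2; apply: leq_trans ha.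
move: h2; rewrite e2 -e1 leqNgt ltn_predL.
by rewrite (leq_trans _ ha).
Qed.

Theorem proposition3p5 (n a b c d : nat) :
  2 <= a -> 2 <= b -> 2 <= c -> 2 <= d ->
  a * b = n -> c * d = n ->
  rect a b <> rect c d ->
  ~ partition_adj n (rect a b) (rect c d).
Proof.
move=> ha hb hc hd _ _ _ [_ [_ [H|H]]].
- exact: (ut_rect_not_rect _ _ _ _ _ ha hb H erefl).
- exact: (ut_rect_not_rect _ _ _ _ _ hc hd H erefl).
Qed.
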